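(* Let $(\mathsf P,\mathcal O)$ be a semitopology and $p\in\mathsf P$. The following are equivalent: (1) $p$ is regular, i.e. $p\in K(p)$ and $K(p)$ is topen; (2) $K(p)$ is a greatest topen neighbourhood of $p$; (3) $K(p)$ is a maximal topen neighbourhood of $p$; (4) $p$ has a maximal topen neighbourhood; (5) $p$ has some topen neighbourhood (a topen set containing $p$).
   Context: A semitopology is a pair $(\mathsf P,\mathcal O)$ where $\mathsf P$ is a set and $\mathcal O\subseteq\mathcal P(\mathsf P)$ contains $\varnothing$ and $\mathsf P$ and is closed under arbitrary unions. Write $X\between Y$ when $X\cap Y\neq\varnothing$. A set $T$ is transitive when for all $O,O'\in\mathcal O$, $O\between T\between O'$ implies $O\between O'$; topen means nonempty, open and transitive. Points $p,p'$ are intertwined when every open set containing $p$ intersects every open set containing $p'$; $I(p)$ denotes the set of points intertwined with $p$. The interior $\mathrm{int}(R)$ of $R\subseteq\mathsf P$ is the union of all open sets contained in $R$. The community of $p$ is $K(p)=\mathrm{int}(I(p))$. A topen neighbourhood of $p$ is a topen set containing $p$. *)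

(* Defs.v *)
From Stdlib Require Import Classical.

Definition set (P : Type) := P -> Prop.

Definition subset {P} (X Y : set P) : Prop := forall x, X x -> Y x.

Definition set_eq {P} (X Y : set P) : Prop := forall x, X x <-> Y x.

Definition between {P} (X Y : set P) : Prop := exists x, X x /\ Y x.

Record semitopology (P : Type) := {
  opn : set P -> Prop;
  opn_empty : opn (fun _ => False);
  opn_full : opn (fun _ => True);
  opn_union : forall F : set P -> Prop,
      (forall O, F O -> opn O) ->
      opn (fun x => exists O, F O /\ O x)
}.
Arguments opn {P} _ _.

Section Defs.
Context {P : Type} (S : semitopology P).

Definition transitive (T : set P) : Prop :=
  forall O O' : set P, opn S O -> opn S O' ->
    between O T -> between T O' -> between O O'.

Definition topen (T : set P) : Prop :=
  (exists x, T x) /\ opn S T /\ transitive T.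

Definition intertwined (p p' : P) : Prop :=
  forall O O' : set P, opn S O -> opn S O' -> O p -> O' p' -> between O O'.

Definition I (p : P) : set P := fun p' => intertwined p p'.

Definition interior (R : set P) : set P :=
  fun x => exists O, opn S O /\ subset O R /\ O x.

Definition K (p : P) : set P := interior (I p).

Definition regular (p : P) : Prop := K p p /\ topen (K p).

Definition topen_nbhd (p : P) (T : set P) : Prop := topen T /\ T p.

Definition greatest_topen_nbhd (p : P) (T : set P) : Prop :=
  topen_nbhd p T /\ forall T', topen_nbhd p T' -> subset T' T.

Definition maximal_topen_nbhd (p : P) (T : set P) : Prop :=
  topen_nbhd p T /\ forall T', topen_nbhd p T' -> subset T T' -> set_eq T' T.
End Defs.

(* Main.v *)
Require Import Defs.
From Stdlib Require Import FunctionalExtensionality PropExtensionality.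

Lemma K_open (P : Type) (S : semitopology P) (p : P) : opn S (K S p).
Proof.
  assert (E : K S p = (fun x => exists O, (opn S O /\ subset O (I S p)) /\ O x)).
  { apply functional_extensionality; intro x; apply propositional_extensionality.
    unfold K, interior; split.
    - intros [O [H1 [H2 H3]]]; exists O; tauto.
    - intros [O [[H1 H2] H3]]; exists O; tauto. }
  rewrite E. apply opn_union. intros O [H _]; exact H.
Qed.

Lemma key (P : Type) (S : semitopology P) (p : P) :
  (exists T, topen_nbhd S p T) -> greatest_topen_nbhd S p (K S p).
Proof.
  intros [T [[_ [HoT HtT]] HTp]].
  assert (Hsub : forall T', topen_nbhd S p T' -> subset T' (K S p)).
  { intros T' [[_ [Ho Ht]] Hp] x Hx. exists T'. split; [exact Ho|split; [|exact Hx]].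
    intros q Hq O O' HO HO' HOp HOq. apply (Ht O O' HO HO').
    - exists p; auto.
    - exists q; auto. }
  split; [|exact Hsub].
  assert (HKp : K S p p) by (apply (Hsub T); repeat split; eauto).
  split; [|exact HKp].
  split; [exists p; exact HKp|]. split; [apply K_open|].
  intros O O' HO HO' [a [HOa HKa]] [b [HKb HO'b]].
  destruct HKa as [U [_ [HU HUa]]]. destruct HKb as [V [_ [HV HVb]]].
  apply (HtT O O' HO HO').
  - destruct (HU a HUa T O HoT HO HTp HOa) as [z [Hz1 Hz2]]. exists z; auto.
  - destruct (HV b HVb T O' HoT HO' HTp HO'b) as [z [Hz1 Hz2]]. exists z; auto.
Qed.

Theorem theorem4p12 (P : Type) (S : semitopology P) (p : P) :
  (regular S p <-> greatest_topen_nbhd S p (K S p)) /\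
  (greatest_topen_nbhd S p (K S p) <-> maximal_topen_nbhd S p (K S p)) /\
  (maximal_topen_nbhd S p (K S p) <-> exists T, maximal_topen_nbhd S p T) /\
  ((exists T, maximal_topen_nbhd S p T) <-> exists T, topen_nbhd S p T).
Proof.
  assert (G : (exists T, topen_nbhd S p T) -> greatest_topen_nbhd S p (K S p)) by apply key.
  assert (GM : greatest_topen_nbhd S p (K S p) -> maximal_topen_nbhd S p (K S p)).
  { intros [H1 H2]. split; [exact H1|]. intros T' HT' Hs x; split; auto. apply (H2 T' HT'). }
  assert (Gr : greatest_topen_nbhd S p (K S p) -> regular S p).
  { intros [[H1 H2] _]. split; assumption. }
  split; [split; [intros [H1 H2]; apply G; exists (K S p); split; assumption| exact Gr]|].
  split; [split; [exact GM| intros [H _]; apply G; exists (K S p); exact H]|].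
  split; [split; [intros H; exists (K S p); exact H| intros [T [H _]]; apply GM, G; exists T; exact H]|].
  split; [intros [T [H _]]; exists T; exact H| intros H; exists (K S p); apply GM, G; exact H].
Qed.
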